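(* Let $\pi_1,\pi_2:\mathbb P^3\dashrightarrow\mathbb P^2$ be linear projections with non-coincident centers $c_1,c_2$. A permissible quadric $Q$ through $c_1,c_2$ defines a (non-degenerate quadratic) Cremona transformation $f:\mathbb P^2\dashrightarrow\mathbb P^2$ such that $f(\pi_1(p))=\pi_2(p)$ for every point $p\in Q$ (where defined). The base points of $f$ are $\pi_1(c_2)$ and the images under $\pi_1$ of the two lines contained in $Q$ passing through $c_1$. Similarly, the base points of $f^{-1}$ are $\pi_2(c_1)$ and the images under $\pi_2$ of the two lines contained in $Q$ passing through $c_2$.
   Context: Work over $\mathbb C$. A linear projection $\pi:\mathbb P^3\dashrightarrow\mathbb P^2$ is $p\mapsto Ap$, $A\in\mathbb C^{3\times4}$ of rank three, with center spanning $\ker A$. A permissible quadric (for centers $c_1\ne c_2$) is a smooth quadric surface containing $c_1,c_2$ but not containing the line $\overline{c_1c_2}$. A quadratic Cremona transformation is a birational map $\mathbb P^2\dashrightarrow\mathbb P^2$ given by three homogeneous quadrics; it has three base points and three exceptional lines, and is non-degenerate if these are distinct. *)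

(* Defs.v *)
(* Projective geometry over a field C, with points of P^n
   represented by nonzero column vectors 'cV[C]_(n+1) up to scaling. *)
From HB Require Import structures.
From mathcomp Require Import all_boot all_order all_algebra.
From mathcomp Require Import complex.
From mathcomp Require Import reals.
Set Implicit Arguments. Unset Strict Implicit. Unset Printing Implicit Defensive.
Import Order.TTheory GRing.Theory Num.Theory.
Local Open Scope ring_scope.

Section Proj.
Variable C : fieldType.

Definition colin n (u v : 'cV[C]_n) : Prop := (\rank (row_mx u v) <= 1)%N.

Definition psame n (u v : 'cV[C]_n) : Prop := u != 0 /\ v != 0 /\ colin u v.

Definition qform n (M : 'M[C]_n) (x : 'cV[C]_n) : C := (x^T *m M *m x) 0 0.

Definition onQ (M : 'M[C]_4) (p : 'cV[C]_4) : Prop := qform M p = 0.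

Definition smooth_quadric (M : 'M[C]_4) : Prop := M^T = M /\ \det M != 0.

Definition line_in_quadric (M : 'M[C]_4) (u v : 'cV[C]_4) : Prop :=
  forall a b : C, onQ M (a *: u + b *: v).

Definition linproj (A : 'M[C]_(3,4)) : Prop := \rank A = 3%N.

Definition is_center (A : 'M[C]_(3,4)) (c : 'cV[C]_4) : Prop := c != 0 /\ A *m c = 0.

(* a quadratic map P^2 --> P^2 given by three quadratic forms *)
Definition qmap := 'I_3 -> 'M[C]_3.
Definition qeval (F : qmap) (x : 'cV[C]_3) : 'cV[C]_3 := \col_k qform (F k) x.

Definition basept (F : qmap) (x : 'cV[C]_3) : Prop := x != 0 /\ qeval F x = 0.

(* exceptional line {a x = 0}: contracted by F to a single point *)
Definition exc_line (F : qmap) (a : 'rV[C]_3) : Prop :=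
  a != 0 /\ exists y : 'cV[C]_3, y != 0 /\
    forall x : 'cV[C]_3, x != 0 -> a *m x = 0 -> colin (qeval F x) y.

(* G is a (quadratic) rational inverse of F:  G o F = id and F o G = id
   as rational maps, i.e. G(F(x)) is proportional to x as a polynomial
   identity and not identically zero (and symmetrically). *)
Definition qinverse (F G : qmap) : Prop :=
  (forall x, colin (qeval G (qeval F x)) x) /\ (exists x, qeval G (qeval F x) != 0) /\
  (forall y, colin (qeval F (qeval G y)) y) /\ (exists y, qeval F (qeval G y) != 0).

Definition quad_cremona (F : qmap) : Prop := exists G, qinverse F G.

Definition nondeg_cremona (F : qmap) : Prop :=
  (exists x1 x2 x3 : 'cV[C]_3,
     [/\ basept F x1, basept F x2 & basept F x3] /\
     [/\ ~ colin x1 x2, ~ colin x1 x3 & ~ colin x2 x3] /\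
     forall x, basept F x -> [\/ colin x x1, colin x x2 | colin x x3]) /\
  (exists a1 a2 a3 : 'rV[C]_3,
     [/\ exc_line F a1, exc_line F a2 & exc_line F a3] /\
     [/\ ~ colin (a1^T) (a2^T), ~ colin (a1^T) (a3^T) & ~ colin (a2^T) (a3^T)] /\
     forall a, exc_line F a -> [\/ colin (a^T) (a1^T), colin (a^T) (a2^T) | colin (a^T) (a3^T)]).

Definition image_of_line_through (A : 'M[C]_(3,4)) (M : 'M[C]_4) (c : 'cV[C]_4)
  (x : 'cV[C]_3) : Prop :=
  exists d : 'cV[C]_4, ~ colin c d /\ line_in_quadric M c d /\ psame x (A *m d).

End Proj.

(* Main.v *)
Require Import Defs.
From HB Require Import structures.
From mathcomp Require Import all_boot all_order all_algebra.
From mathcomp Require Import complex reals.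
From mathcomp Require Import ring.
Set Implicit Arguments. Unset Strict Implicit. Unset Printing Implicit Defensive.
Import Order.TTheory GRing.Theory Num.Theory.
Local Open Scope ring_scope.

Ltac nzt := rewrite ?(mul1r, mulr1, mul0r, mulr0, mulrN, mulNr, opprK, oppr0, oppr_eq0); rewrite ?mulf_neq0 ?oppr_eq0 //.

Section Gen.
Variable K : fieldType.
Hypothesis two_nz : (2 : K) != 0.

Lemma colinP n (u v : 'cV[K]_n) : colin u v <-> u = 0 \/ exists k, v = k *: u.
Proof.
rewrite /colin -mxrank_tr tr_row_mx -addsmxE.
split.
  move=> h; case: (eqVneq u 0) => [->|nz]; [by left|right].
  have ru : \rank u^T = 1%N by rewrite rank_rV trmx_eq0 nz.
  have s : (u^T + v^T <= u^T)%MS.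
    have := mxrank_leqif_sup (addsmxSl u^T v^T).
    move=> /leqifP; case: ifP => // _; rewrite ru => lt.
    by move: h; rewrite leqNgt lt.
  have /sub_rVP [k hk] : (v^T <= u^T)%MS := submx_trans (addsmxSr _ _) s.
  by exists k; apply: trmx_inj; rewrite hk linearZ.
case=> [->|[k ->]].
  have h : ((0 : 'rV[K]_n) + v^T <= v^T)%MS by rewrite addsmx_sub sub0mx submx_refl.
  by rewrite trmx0; exact: leq_trans (mxrankS h) (rank_leq_row _).
have h : (u^T + (k *: u)^T <= u^T)%MS.
  by rewrite addsmx_sub submx_refl linearZ scalemx_sub ?submx_refl.
exact: leq_trans (mxrankS h) (rank_leq_row _).
Qed.


Lemma sum3 (F : 'I_3 -> K) : \sum_i F i = F 0 + F 1 + F 2.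
Proof.
rewrite !big_ord_recr big_ord0 /= add0r.
by congr (F _ + F _ + F _); apply: val_inj.
Qed.

Lemma sum4 (F : 'I_4 -> K) : \sum_i F i = F 0 + F 1 + F 2 + F 3.
Proof.
rewrite !big_ord_recr big_ord0 /= add0r.
by congr (F _ + F _ + F _ + F _); apply: val_inj.
Qed.

Lemma qformE n (N : 'M[K]_n) z :
  qform N z = \sum_j \sum_i z i 0 * N i j * z j 0.
Proof.
rewrite /qform mxE; apply: eq_bigr => j _; rewrite mxE big_distrl /=.
by apply: eq_bigr => i _; rewrite mxE.
Qed.

Definition v3 (a b c : K) : 'cV[K]_3 := \col_(i < 3) [:: a; b; c]`_i.

Lemma v3E (z : 'cV[K]_3) : z = v3 (z 0 0) (z 1 0) (z 2 0).
Proof.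
apply/matrixP => i j; rewrite !mxE ord1.
case: i => [[|[|[|m]]] Hi] /=; try by congr (z _ _); apply: val_inj.
by [].
Qed.

Lemma v3_0 a b c : v3 a b c 0 0 = a. Proof. by rewrite mxE. Qed.
Lemma v3_1 a b c : v3 a b c 1 0 = b. Proof. by rewrite mxE. Qed.
Lemma v3_2 a b c : v3 a b c 2 0 = c. Proof. by rewrite mxE. Qed.

Lemma v3_inj a b c a' b' c' : v3 a b c = v3 a' b' c' -> [/\ a = a', b = b' & c = c'].
Proof. move=> e; split; [move: (v3_0 a b c) | move: (v3_1 a b c) | move: (v3_2 a b c)]; by rewrite e mxE. Qed.

Lemma v3_eq0 a b c : (v3 a b c == 0) = [&& a == 0, b == 0 & c == 0].
Proof.
apply/eqP/and3P => [e|[/eqP-> /eqP-> /eqP->]].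
  have : v3 a b c = v3 0 0 0 by rewrite e [0 in LHS]v3E !mxE.
  by case/v3_inj => -> -> ->.
by rewrite [RHS]v3E !mxE.
Qed.

Lemma v3Z k a b c : k *: v3 a b c = v3 (k * a) (k * b) (k * c).
Proof. by rewrite [LHS]v3E !mxE. Qed.

Lemma v3D a b c a' b' c' : v3 a b c + v3 a' b' c' = v3 (a + a') (b + b') (c + c').
Proof. by rewrite [LHS]v3E !mxE. Qed.

Lemma qform3 (N : 'M[K]_3) a b c : qform N (v3 a b c) =
  a * N 0 0 * a + a * N 0 1 * b + a * N 0 2 * c +
  (b * N 1 0 * a + b * N 1 1 * b + b * N 1 2 * c) +
  (c * N 2 0 * a + c * N 2 1 * b + c * N 2 2 * c).
Proof. rewrite qformE !sum3 !mxE /=; ring. Qed.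


Lemma colin_sym n (u v : 'cV[K]_n) : colin u v -> colin v u.
Proof.
move/colinP=> [->|[k ->]]; apply/colinP.
  by right; exists 0; rewrite scale0r.
have [->|kn] := eqVneq k 0; first by left; rewrite scale0r.
by right; exists k^-1; rewrite scalerA mulVf // scale1r.
Qed.

Lemma colinZ n (u : 'cV[K]_n) k : colin u (k *: u).
Proof. by apply/colinP; right; exists k. Qed.

Lemma colinZl n (u : 'cV[K]_n) k : colin (k *: u) u.
Proof. exact/colin_sym/colinZ. Qed.

Lemma colin0 n (v : 'cV[K]_n) : colin 0 v.
Proof. by apply/colinP; left. Qed.

Lemma colin0r n (v : 'cV[K]_n) : colin v 0.
Proof. exact/colin_sym/colin0. Qed.

Lemma two_colin n (u v w : 'cV[K]_n) : colin u v -> colin u w -> ~ colin v w -> u = 0.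
Proof.
move=> /colinP[//|[k ek]] /colinP[//|[k' ek']] nc; exfalso; apply: nc.
have [k0|kn] := eqVneq k 0; first by rewrite ek k0 scale0r; exact: colin0.
apply/colinP; right; exists (k' / k).
by rewrite ek ek' scalerA mulfVK.
Qed.

Lemma psameP n (x v : 'cV[K]_n) : psame x v <-> v != 0 /\ exists k, k != 0 /\ x = k *: v.
Proof.
split.
  move=> [xn [vn /colinP [xe|[k ek]]]]; first by rewrite xe eqxx in xn.
  split => //; exists k^-1; have kn : k != 0 by apply: contraNneq vn => k0; rewrite ek k0 scale0r.
  by rewrite ek scalerA mulVf ?scale1r ?invr_eq0.
move=> [vn [k [kn ->]]]; split; first by rewrite scaler_eq0 negb_or kn.
by split => //; exact: colinZl.
Qed.

Lemma colin_trans_psame n (x y v : 'cV[K]_n) : psame x v -> psame y v -> psame x y.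
Proof.
move=> /psameP [vn [k [kn ->]]] /psameP [_ [k' [kn' ->]]].
apply/psameP; split; first by rewrite scaler_eq0 negb_or kn'.
by exists (k / k'); split; [rewrite mulf_neq0 ?invr_eq0 | rewrite scalerA mulfVK].
Qed.

Lemma psame_sym n (x v : 'cV[K]_n) : psame x v -> psame v x.
Proof. by move=> [a [b c]]; split; [|split; [|exact: colin_sym]]. Qed.

Lemma psameZr n (x v : 'cV[K]_n) k : k != 0 -> psame x (k *: v) <-> psame x v.
Proof.
move=> kn; rewrite !psameP scaler_eq0 negb_or kn /=; split => -[vn [l [ln ->]]]; split => //.
  by exists (l * k); rewrite scalerA mulf_neq0.
by exists (l / k); rewrite scalerA mulfVK // mulf_neq0 ?invr_eq0.
Qed.

Lemma psame_refl n (x : 'cV[K]_n) : x != 0 -> psame x x.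
Proof. by move=> xn; apply/psameP; split => //; exists 1; rewrite scale1r oner_eq0. Qed.

Definition v4 (a b c d : K) : 'cV[K]_4 := \col_(i < 4) [:: a; b; c; d]`_i.

Lemma v4E (z : 'cV[K]_4) : z = v4 (z 0 0) (z 1 0) (z 2 0) (z 3 0).
Proof.
apply/matrixP => i j; rewrite !mxE ord1.
case: i => [[|[|[|[|m]]]] Hi] /=; try by congr (z _ _); apply: val_inj.
by [].
Qed.

Lemma v4_inj a b c d a' b' c' d' : v4 a b c d = v4 a' b' c' d' ->
  [/\ a = a', b = b', c = c' & d = d'].
Proof.
move=> e; split; [move: (congr1 (fun z : 'cV[K]_4 => z 0 0) e) | move: (congr1 (fun z : 'cV[K]_4 => z 1 0) e)
 | move: (congr1 (fun z : 'cV[K]_4 => z 2 0) e) | move: (congr1 (fun z : 'cV[K]_4 => z 3 0) e)]; by rewrite /= !mxE.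
Qed.

Lemma v4_eq0 a b c d : (v4 a b c d == 0) = [&& a == 0, b == 0, c == 0 & d == 0].
Proof.
apply/eqP/and4P => [e|[/eqP-> /eqP-> /eqP-> /eqP->]].
  have : v4 a b c d = v4 0 0 0 0 by rewrite e [0 in LHS]v4E !mxE.
  by case/v4_inj => -> -> -> ->.
by rewrite [RHS]v4E !mxE.
Qed.

Lemma v4Z k a b c d : k *: v4 a b c d = v4 (k * a) (k * b) (k * c) (k * d).
Proof. by rewrite [LHS]v4E !mxE. Qed.

Lemma v4D a b c d a' b' c' d' :
  v4 a b c d + v4 a' b' c' d' = v4 (a + a') (b + b') (c + c') (d + d').
Proof. by rewrite [LHS]v4E !mxE. Qed.

Definition P1 : 'M[K]_(3,4) := \matrix_(i, j) (j == i.+1 :> nat)%:R.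
Definition P2 : 'M[K]_(3,4) :=
  \matrix_(i, j) (((i == 0 :> nat) && (j == 0 :> nat)) || ((i != 0 :> nat) && (j == i.+1 :> nat)))%:R.
Definition M0 : 'M[K]_4 := \matrix_(i, j) ((i + j == 1)%N || (i + j == 5)%N)%:R.

Lemma P1v4 a b c d : P1 *m v4 a b c d = v3 b c d.
Proof. rewrite [LHS]v3E !mxE !sum4 !mxE /=; congr v3; ring. Qed.

Lemma P2v4 a b c d : P2 *m v4 a b c d = v3 a c d.
Proof. rewrite [LHS]v3E !mxE !sum4 !mxE /=; congr v3; ring. Qed.

Lemma qM0 a b c d : qform M0 (v4 a b c d) = 2 * (a * b + c * d).
Proof. rewrite qformE !sum4 !mxE /=; ring. Qed.


Definition F0 : qmap K := fun k =>
  \matrix_(i, j) (if k == 0 then - ((i == 1) && (j == 2))%:R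
                  else if k == 1 then ((i == 0) && (j == 1))%:R
                  else ((i == 0) && (j == 2))%:R).

Lemma qevalE (G : qmap K) z :
  qeval G z = v3 (qform (G 0) z) (qform (G 1) z) (qform (G 2) z).
Proof. by rewrite [LHS]v3E !mxE. Qed.

Lemma F0E a b c : qeval F0 (v3 a b c) = v3 (- (b * c)) (a * b) (a * c).
Proof. rewrite qevalE !qform3 !mxE /=; congr v3; ring. Qed.

Lemma qformZ n (N : 'M[K]_n) k v : qform N (k *: v) = k ^+ 2 * qform N v.
Proof.
rewrite !qformE mulr_sumr; apply: eq_bigr => j _; rewrite mulr_sumr.
by apply: eq_bigr => i _; rewrite !mxE; ring.
Qed.

Lemma qformN n (N : 'M[K]_n) v : qform N (- v) = qform N v.
Proof. rewrite -scaleN1r qformZ; by rewrite expr2 mulrNN mulr1 mul1r. Qed.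

Lemma qevalN (G : qmap K) v : qeval G (- v) = qeval G v.
Proof. by apply/matrixP => i j; rewrite !mxE qformN. Qed.

Lemma qevalZ (G : qmap K) k v : qeval G (k *: v) = k ^+ 2 *: qeval G v.
Proof. by apply/matrixP => i j; rewrite !mxE qformZ. Qed.

Lemma qeval0 (G : qmap K) : qeval G 0 = 0.
Proof. by rewrite -(scale0r (0 : 'cV[K]_3)) qevalZ expr2 mul0r !scale0r. Qed.

Lemma v3_neq0 a b c : a != 0 \/ b != 0 \/ c != 0 -> v3 a b c != 0.
Proof. by rewrite v3_eq0 => -[h|[h|h]]; apply/and3P => -[/eqP a0 /eqP b0 /eqP c0]; move: h; rewrite ?a0 ?b0 ?c0 eqxx. Qed.

Definition E0 := v3 1 0 0.
Definition E1 := v3 0 1 0.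
Definition E2 := v3 0 0 1.

Lemma not_colin3 a b c a' b' c' :
  v3 a b c != 0 -> ~ (exists k, v3 a' b' c' = k *: v3 a b c) -> ~ colin (v3 a b c) (v3 a' b' c').
Proof. by move=> nz nk /colinP [e|//]; move: nz; rewrite e eqxx. Qed.

Lemma ncE01 : ~ colin E0 E1.
Proof.
apply: not_colin3; first by apply: v3_neq0; left; exact: oner_neq0.
by move=> [k]; rewrite v3Z => /v3_inj [_ ]; rewrite mulr0 => /eqP; rewrite oner_eq0.
Qed.
Lemma ncE02 : ~ colin E0 E2.
Proof.
apply: not_colin3; first by apply: v3_neq0; left; exact: oner_neq0.
by move=> [k]; rewrite v3Z => /v3_inj [_ _ ]; rewrite mulr0 => /eqP; rewrite oner_eq0.
Qed.
Lemma ncE12 : ~ colin E1 E2.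
Proof.
apply: not_colin3; first by apply: v3_neq0; right; left; exact: oner_neq0.
by move=> [k]; rewrite v3Z => /v3_inj [_ _ ]; rewrite mulr0 => /eqP; rewrite oner_eq0.
Qed.

Lemma E_neq0 : [/\ E0 != 0, E1 != 0 & E2 != 0].
Proof. by split; apply: v3_neq0; [left|right;left|right;right]; exact: oner_neq0. Qed.

Lemma basept_F0 x : basept F0 x <-> [\/ psame x E0, psame x E1 | psame x E2].
Proof.
have [n0 n1 n2] := E_neq0.
rewrite [x]v3E; set a := x 0 0; set b := x 1 0; set c := x 2 0.
split.
  move=> [xn]; rewrite F0E => /eqP; rewrite v3_eq0 oppr_eq0 !mulf_eq0 => /and3P [bc ab ac].
  have [a0|an] := eqVneq a 0.
    have [b0|bn] := eqVneq b 0.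
      have [c0|cn] := eqVneq c 0; first by move: xn; rewrite a0 b0 c0 v3_eq0 !eqxx.
      constructor 3; apply/psameP; split => //; exists c; split => //.
      by rewrite v3Z a0 b0 !mulr0 mulr1.
    have c0 : c == 0 by move: bc; rewrite (negPf bn).
    constructor 2; apply/psameP; split => //; exists b; split => //.
    by rewrite v3Z a0 (eqP c0) !mulr0 mulr1.
  have b0 : b == 0 by move: ab; rewrite (negPf an).
  have c0 : c == 0 by move: ac; rewrite (negPf an).
  constructor 1; apply/psameP; split => //; exists a; split => //.
  by rewrite v3Z (eqP b0) (eqP c0) !mulr0 mulr1.
case=> /psameP [_ [k [kn ->]]]; (split; [by rewrite scaler_eq0 negb_or kn|]);
  by rewrite /E0 /E1 /E2 v3Z F0E !(mulr0, mul0r, oppr0, mulr1) [RHS]v3E !mxE.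
Qed.


Lemma sc0 n : (0 : K)%:M = 0 :> 'M[K]_n.
Proof. by apply/matrixP => i j; rewrite !mxE mul0rn. Qed.

Lemma sc_eq0 (k : K) : k%:M = 0 :> 'M[K]_1 -> k = 0.
Proof. by move=> /(congr1 (fun m : 'M[K]_1 => m 0 0)); rewrite !mxE mulr1n. Qed.

Lemma rowdot a b c x y z : (v3 a b c)^T *m v3 x y z = (a * x + b * y + c * z)%:M.
Proof. by apply/matrixP => i j; rewrite !ord1 !mxE sum3 !mxE /= mulr1n. Qed.

Lemma F0F0 a b c : qeval F0 (qeval F0 (v3 a b c)) = (- (a * b * c)) *: v3 a b c.
Proof. rewrite !F0E v3Z; congr v3; ring. Qed.

Lemma qinv_F0 : qinverse F0 F0.
Proof.
have h : forall x, colin (qeval F0 (qeval F0 x)) x.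
  by move=> x; rewrite [x]v3E F0F0; exact: colinZl.
have h' : exists x, qeval F0 (qeval F0 x) != 0.
  exists (v3 1 1 1); rewrite F0F0 scaler_eq0 negb_or oppr_eq0 !mul1r oner_eq0 /=.
  by apply: v3_neq0; left; exact: oner_neq0.
by split; [|split; [|split]].
Qed.

Lemma col_lemma (y : 'cV[K]_3) k k' i j :
  (k *: y) i 0 != 0 -> (k *: y) j 0 = 0 -> (k' *: y) j 0 != 0 -> False.
Proof.
rewrite !mxE => h1 h2 h3.
have kn : k != 0 by apply: contraNneq h1 => ->; rewrite mul0r.
have yj : y j 0 = 0 by move: h2 => /eqP; rewrite mulf_eq0 (negPf kn) /= => /eqP.
by move: h3; rewrite yj mulr0 eqxx.
Qed.

Lemma exc_F0 (a : 'rV[K]_3) : exc_line F0 a -> [\/ colin a^T E0, colin a^T E1 | colin a^T E2].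
Proof.
move=> [an [y [yn H]]].
have H' : forall x, a *m x = 0 -> exists k, qeval F0 x = k *: y.
  move=> x ax; have [->|xn] := eqVneq x 0.
    by exists 0; rewrite scale0r qeval0.
  have /colin_sym /colinP [y0|//] := H x xn ax; by rewrite y0 eqxx in yn.
have aE : a = (v3 (a 0 0) (a 0 1) (a 0 2))^T.
  by rewrite -[LHS]trmxK [a^T]v3E !mxE.
move: H'; rewrite aE trmxK; set a0 := a 0 0; set a1 := a 0 1; set a2 := a 0 2 => H'.
have Hd : forall x y' z, a0 * x + a1 * y' + a2 * z = 0 -> exists k, qeval F0 (v3 x y' z) = k *: y.
  move=> x y0 z e; apply: (H' (v3 x y0 z)); by rewrite rowdot e sc0.
have c0 : a1 = 0 -> a2 = 0 -> colin (v3 a0 a1 a2) E0.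
  move=> -> ->; have -> : v3 a0 0 0 = a0 *: E0 by rewrite /E0 v3Z mulr1 mulr0.
  exact: colinZl.
have c1 : a0 = 0 -> a2 = 0 -> colin (v3 a0 a1 a2) E1.
  move=> -> ->; have -> : v3 0 a1 0 = a1 *: E1 by rewrite /E1 v3Z mulr1 mulr0.
  exact: colinZl.
have c2 : a0 = 0 -> a1 = 0 -> colin (v3 a0 a1 a2) E2.
  move=> -> ->; have -> : v3 0 0 a2 = a2 *: E2 by rewrite /E2 v3Z mulr1 mulr0.
  exact: colinZl.
have [a00|a0n] := eqVneq a0 0; have [a10|a1n] := eqVneq a1 0.
- by constructor 3; exact: c2.
- have [a20|a2n] := eqVneq a2 0; first by constructor 2; exact: c1.
  exfalso.
  have [k ek] := Hd 0 a2 (- a1) ltac:(ring).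
  have [k' ek'] := Hd 1 a2 (- a1) ltac:(rewrite a00; ring).
  apply: (@col_lemma y k k' 0 1); rewrite -?ek -?ek' F0E !mxE /=.
  + by nzt.
  + by nzt.
  + by nzt.
- have [a20|a2n] := eqVneq a2 0; first by constructor 1; exact: c0.
  exfalso.
  have [k ek] := Hd a2 0 (- a0) ltac:(ring).
  have [k' ek'] := Hd a2 1 (- a0) ltac:(rewrite a10; ring).
  apply: (@col_lemma y k k' 2 0); rewrite -?ek -?ek' F0E !mxE /=.
  + by nzt.
  + by nzt.
    + by nzt.
- exfalso.
  have [k ek] := Hd a1 (- a0) 0 ltac:(ring).
  have [a20|a2n] := eqVneq a2 0.
    have [k' ek'] := Hd a1 (- a0) 1 ltac:(rewrite a20; ring).
    apply: (@col_lemma y k k' 1 0); rewrite -?ek -?ek' F0E !mxE /=.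
    + by nzt.
    + by nzt.
    + by nzt.
  have [k' ek'] := Hd 0 a2 (- a1) ltac:(ring).
  apply: (@col_lemma y k k' 1 0); rewrite -?ek -?ek' F0E !mxE /=.
  + by nzt.
  + by nzt.
  + by nzt.
Qed.


Lemma exc_F0_E0 : exc_line F0 E0^T.
Proof.
have [n0 n1 n2] := E_neq0.
split; first by rewrite trmx_eq0.
exists E0; split => // x _; rewrite [x]v3E /E0 rowdot => /sc_eq0.
rewrite mul1r !mul0r !addr0 => ->; rewrite F0E.
have -> : v3 (- (x 1 0 * x 2 0)) (0 * x 1 0) (0 * x 2 0) = (- (x 1 0 * x 2 0)) *: v3 1 0 0.
  by rewrite v3Z !mulr0 mulr1 !mul0r.
exact: colinZl.
Qed.

Lemma exc_F0_E1 : exc_line F0 E1^T.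
Proof.
have [n0 n1 n2] := E_neq0.
split; first by rewrite trmx_eq0.
exists E2; split => // x _; rewrite [x]v3E /E1 rowdot => /sc_eq0.
rewrite mul1r !mul0r add0r addr0 => ->; rewrite F0E.
have -> : v3 (- (0 * x 2 0)) (x 0 0 * 0) (x 0 0 * x 2 0) = (x 0 0 * x 2 0) *: v3 0 0 1.
  by rewrite v3Z !mulr0 mulr1 !mul0r oppr0.
exact: colinZl.
Qed.

Lemma exc_F0_E2 : exc_line F0 E2^T.
Proof.
have [n0 n1 n2] := E_neq0.
split; first by rewrite trmx_eq0.
exists E1; split => // x _; rewrite [x]v3E /E2 rowdot => /sc_eq0.
rewrite mul1r !mul0r !add0r => ->; rewrite F0E.
have -> : v3 (- (x 1 0 * 0)) (x 0 0 * x 1 0) (x 0 0 * 0) = (x 0 0 * x 1 0) *: v3 0 1 0.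
  by rewrite v3Z !mulr0 mulr1 oppr0.
exact: colinZl.
Qed.

Lemma nondeg_F0 : nondeg_cremona F0.
Proof.
have [n0 n1 n2] := E_neq0.
split.
  exists E0, E1, E2; split; last split.
  - by split; apply/basept_F0; [constructor 1|constructor 2|constructor 3]; exact: psame_refl.
  - by split; [exact: ncE01|exact: ncE02|exact: ncE12].
  - by move=> x /basept_F0 [] [_ [_ h]]; [constructor 1|constructor 2|constructor 3].
exists E0^T, E1^T, E2^T; rewrite !trmxK; split; last split.
- by split; [exact: exc_F0_E0|exact: exc_F0_E1|exact: exc_F0_E2].
- by split; [exact: ncE01|exact: ncE02|exact: ncE12].
- by move=> a /exc_F0.
Qed.


Lemma IL_core x d2 d3 : d2 * d3 = 0 -> psame x (v3 0 d2 d3) -> psame x E1 \/ psame x E2.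
Proof.
move=> e /psameP [nz [k [kn ->]]].
have [d20|d2n] := eqVneq d2 0.
  have d3n : d3 != 0 by apply: contraNneq nz => d30; rewrite d20 d30 v3_eq0 eqxx.
  right; apply/psameP; split; first by have [] := E_neq0.
  by exists (k * d3); rewrite mulf_neq0 // /E2 d20; split => //; rewrite !v3Z; congr v3; ring.
have d30 : d3 = 0 by move/eqP: e; rewrite mulf_eq0 (negPf d2n) => /eqP.
left; apply/psameP; split; first by have [] := E_neq0.
by exists (k * d2); rewrite mulf_neq0 // /E1 d30; split => //; rewrite !v3Z; congr v3; ring.
Qed.

Lemma nc_e4 a b c d : ~ colin (v4 1 0 0 0) (v4 a b c d) -> ~ colin (v4 1 0 0 0) (v4 a b c d).
Proof. by []. Qed.

Lemma nc_40 a b c d : b != 0 \/ c != 0 \/ d != 0 -> ~ colin (v4 1 0 0 0) (v4 a b c d).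
Proof.
move=> h /colinP [/eqP|[k]]; last rewrite v4Z => /v4_inj [_ eb ec ed].
  by rewrite v4_eq0 oner_eq0.
by move: h; rewrite eb ec ed !mulr0 eqxx => -[|[]].
Qed.

Lemma nc_41 a b c d : a != 0 \/ c != 0 \/ d != 0 -> ~ colin (v4 0 1 0 0) (v4 a b c d).
Proof.
move=> h /colinP [/eqP|[k]]; last rewrite v4Z => /v4_inj [ea _ ec ed].
  by rewrite v4_eq0 oner_eq0 andbF.
by move: h; rewrite ea ec ed !mulr0 eqxx => -[|[]].
Qed.

Lemma IL1 x : image_of_line_through P1 M0 (v4 1 0 0 0) x <-> psame x E1 \/ psame x E2.
Proof.
split.
  move=> [d [_ [Hl Hp]]]; move: Hl Hp; rewrite [d]v4E P1v4.
  set d0 := d 0 0; set d1 := d 1 0; set d2 := d 2 0; set d3 := d 3 0 => Hl Hp.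
  have h1 := Hl 1 1; have h0 := Hl 0 1.
  rewrite /onQ !v4Z v4D qM0 in h1; rewrite /onQ !v4Z v4D qM0 in h0.
  have h1' : 2 * ((1 + d0) * d1 + d2 * d3) = 0 by rewrite -h1; ring.
  have h0' : 2 * (d0 * d1 + d2 * d3) = 0 by rewrite -h0; ring.
  have : 2 * d1 = 2 * ((1 + d0) * d1 + d2 * d3) - 2 * (d0 * d1 + d2 * d3) by ring.
  rewrite h1' h0' subrr => /eqP; rewrite mulf_eq0 (negPf two_nz) /= => /eqP d10.
  move: h0'; rewrite d10 mulr0 add0r => /eqP; rewrite mulf_eq0 (negPf two_nz) /= => /eqP e.
  by apply: IL_core e _; rewrite -d10.
move=> h; have [n0 n1 n2] := E_neq0.
case: h => h.
  exists (v4 0 0 1 0); split; first by apply: nc_40; right; left; exact: oner_neq0.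
  split; last by rewrite P1v4.
  by move=> a b; rewrite /onQ !v4Z v4D qM0; ring.
exists (v4 0 0 0 1); split; first by apply: nc_40; right; right; exact: oner_neq0.
split; last by rewrite P1v4.
by move=> a b; rewrite /onQ !v4Z v4D qM0; ring.
Qed.

Lemma IL2 x : image_of_line_through P2 M0 (v4 0 1 0 0) x <-> psame x E1 \/ psame x E2.
Proof.
split.
  move=> [d [_ [Hl Hp]]]; move: Hl Hp; rewrite [d]v4E P2v4.
  set d0 := d 0 0; set d1 := d 1 0; set d2 := d 2 0; set d3 := d 3 0 => Hl Hp.
  have h1 := Hl 1 1; have h0 := Hl 0 1.
  rewrite /onQ !v4Z v4D qM0 in h1; rewrite /onQ !v4Z v4D qM0 in h0.
  have h1' : 2 * (d0 * (1 + d1) + d2 * d3) = 0 by rewrite -h1; ring.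
  have h0' : 2 * (d0 * d1 + d2 * d3) = 0 by rewrite -h0; ring.
  have : 2 * d0 = 2 * (d0 * (1 + d1) + d2 * d3) - 2 * (d0 * d1 + d2 * d3) by ring.
  rewrite h1' h0' subrr => /eqP; rewrite mulf_eq0 (negPf two_nz) /= => /eqP d00.
  move: h0'; rewrite d00 mul0r add0r => /eqP; rewrite mulf_eq0 (negPf two_nz) /= => /eqP e.
  by apply: IL_core e _; rewrite -d00.
move=> h; have [n0 n1 n2] := E_neq0.
case: h => h.
  exists (v4 0 0 1 0); split; first by apply: nc_41; right; left; exact: oner_neq0.
  split; last by rewrite P2v4.
  by move=> a b; rewrite /onQ !v4Z v4D qM0; ring.
exists (v4 0 0 0 1); split; first by apply: nc_41; right; right; exact: oner_neq0.
split; last by rewrite P2v4.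
by move=> a b; rewrite /onQ !v4Z v4D qM0; ring.
Qed.

Lemma F0_onQ p : onQ M0 p -> qeval F0 (P1 *m p) = p 1 0 *: (P2 *m p).
Proof.
rewrite [p]v4E /onQ qM0 P1v4 P2v4 F0E v3Z !mxE /= => e.
have e' : - (p 2 0 * p 3 0) = p 1 0 * p 0 0.
  apply/eqP; rewrite -subr_eq0 -[_ - _]opprK oppr_eq0; apply/eqP.
  apply: (mulfI two_nz); rewrite mulr0 -e; ring.
by rewrite e'.
Qed.


Lemma one_neq_m1 : (1 : K) <> -1.
Proof.
move=> e; move: two_nz; have -> : (2 : K) = 1 + 1 by ring.
by rewrite {1}e addNr eqxx.
Qed.

Lemma mul2_eq0 (x : K) : 2 * x = 0 -> x = 0.
Proof. by move/eqP; rewrite mulf_eq0 (negPf two_nz) => /eqP. Qed.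

Lemma mul4_eq0 (x : K) : 4 * x = 0 -> x = 0.
Proof. by move=> h; apply: mul2_eq0; apply: mul2_eq0; rewrite mulrA -natrM. Qed.

Lemma lc4g (s1 s2 s3 s4 x y z w t : K) : x = 0 -> y = 0 -> z = 0 -> w = 0 ->
  t = s1 * x + s2 * y + s3 * z + s4 * w -> t = 0.
Proof. by move=> -> -> -> -> ->; rewrite !mulr0 !addr0. Qed.

Lemma eq_by_ring (x y x' y' : K) : x = y -> (x' - y' = x - y) \/ (x' - y' = y - x) -> x' = y'.
Proof. by move=> -> [] /eqP; rewrite subrr subr_eq0 => /eqP. Qed.

Lemma elim_k (x0 x1 k s0 s1 : K) : x0 = k * s0 -> x1 = k * s1 -> x1 * s0 = x0 * s1.
Proof. by move=> -> ->; rewrite -!mulrA [s1 * _]mulrC. Qed.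

Lemma toz (x y : K) : x = y -> x - y = 0.
Proof. by move=> ->; rewrite subrr. Qed.

Lemma solve_sys (a0 b0 c0 a1 b1 c1 a2 b2 c2 : K) :
  a1 - b1 - c1 = a0 - b0 - c0 ->
  a1 + b1 + c1 = - (a0 + b0 + c0) ->
  - a1 + b1 - c1 = - (- a0 + b0 - c0) ->
  - a1 - b1 + c1 = - a0 - b0 + c0 ->
  a2 - b2 - c2 = a0 - b0 - c0 ->
  a2 + b2 + c2 = - (a0 + b0 + c0) ->
  - a2 + b2 - c2 = - a0 + b0 - c0 ->
  - a2 - b2 + c2 = - (- a0 - b0 + c0) ->
  b0 = 0 /\ c0 = 0 /\ a1 = 0 /\ b1 = 0 /\ c1 = - a0 /\ a2 = 0 /\ b2 = - a0 /\ c2 = 0.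
Proof.
move=> /toz e /toz f /toz g /toz h /toz i /toz j /toz k /toz l.
have hb0 : b0 = 0 by apply: mul4_eq0; apply: (@lc4g 1 1 1 1 _ _ _ _ _ e f g h); ring.
have hc0 : c0 = 0 by apply: mul4_eq0; apply: (@lc4g 1 1 1 1 _ _ _ _ _ i j k l); ring.
subst b0 c0.
have ha1 : a1 = 0 by apply: mul2_eq0; apply: (@lc4g 1 1 0 0 _ _ _ _ _ e f g h); ring.
have ha2 : a2 = 0 by apply: mul2_eq0; apply: (@lc4g 1 1 0 0 _ _ _ _ _ i j k l); ring.
have hb1 : b1 = 0 by apply: mul4_eq0; apply: (@lc4g (-1) 1 1 (-1) _ _ _ _ _ e f g h); ring.
have hc1 : c1 + a0 = 0 by apply: mul4_eq0; apply: (@lc4g (-1) 1 (-1) 1 _ _ _ _ _ e f g h); ring.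
have hb2 : b2 + a0 = 0 by apply: mul4_eq0; apply: (@lc4g (-1) 1 1 (-1) _ _ _ _ _ i j k l); ring.
have hc2 : c2 = 0 by apply: mul4_eq0; apply: (@lc4g (-1) 1 (-1) 1 _ _ _ _ _ i j k l); ring.
move/eqP: hc1; rewrite addr_eq0 => /eqP hc1.
move/eqP: hb2; rewrite addr_eq0 => /eqP hb2.
by do !split.
Qed.


Lemma pt_eq (G : qmap K) y : y != 0 -> colin (qeval G (qeval F0 y)) y ->
  exists k, qeval G (qeval F0 y) = k *: y.
Proof. by move=> yn /colin_sym /colinP [y0|//]; rewrite y0 eqxx in yn. Qed.

Lemma Gvanish (G : qmap K) v u w : (forall y, colin (qeval G (qeval F0 y)) y) ->
  qeval F0 u = v -> qeval F0 w = (-1) *: v -> ~ colin u w -> qeval G v = 0.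
Proof.
move=> Ha fu fw nc; apply: (@two_colin _ _ u w) => //; first by rewrite -fu.
by have := Ha w; rewrite fw qevalZ expr2 mulN1r opprK scale1r.
Qed.

Lemma inv_F0 (G : qmap K) : qinverse F0 G ->
  exists l, l != 0 /\ forall z, qeval G z = l *: qeval F0 z.
Proof.
move=> [Ha [[x0 Hx0] _]].
have GE1 : qeval G E1 = 0.
  apply: (@Gvanish G E1 (v3 1 1 0) (v3 1 (-1) 0)) => //.
  - by rewrite F0E /E1; congr v3; ring.
  - by rewrite F0E /E1 v3Z; congr v3; ring.
  - apply: not_colin3; first by apply: v3_neq0; left; exact: oner_neq0.
    move=> [k]; rewrite v3Z => /v3_inj [e1 e2 _]; apply: one_neq_m1.
    exact: (etrans e1 (esym e2)).
have GE0 : qeval G E0 = 0.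
  apply: (@Gvanish G E0 (v3 0 1 (-1)) (v3 0 1 1)) => //.
  - by rewrite F0E /E0; congr v3; ring.
  - by rewrite F0E /E0 v3Z; congr v3; ring.
  - apply: not_colin3; first by apply: v3_neq0; right; left; exact: oner_neq0.
    move=> [k]; rewrite v3Z => /v3_inj [_ e2 e3].
    have k1 : k = 1 by rewrite e2 mulr1.
    by move: e3; rewrite k1 mul1r ; exact: one_neq_m1.
have GE2 : qeval G E2 = 0.
  apply: (@Gvanish G E2 (v3 1 0 1) (v3 1 0 (-1))) => //.
  - by rewrite F0E /E2; congr v3; ring.
  - by rewrite F0E /E2 v3Z; congr v3; ring.
  - apply: not_colin3; first by apply: v3_neq0; left; exact: oner_neq0.
    move=> [k]; rewrite v3Z => /v3_inj [e1 _ e3]; apply: one_neq_m1.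
    exact: (etrans e1 (esym e3)).
have D0 k : G k 0 0 = 0.
  have := congr1 (fun v : 'cV[K]_3 => v k 0) GE0; rewrite /= !mxE /E0 qform3 => h.
  by apply: (eq_by_ring h); left; ring.
have D1 k : G k 1 1 = 0.
  have := congr1 (fun v : 'cV[K]_3 => v k 0) GE1; rewrite /= !mxE /E1 qform3 => h.
  by apply: (eq_by_ring h); left; ring.
have D2 k : G k 2 2 = 0.
  have := congr1 (fun v : 'cV[K]_3 => v k 0) GE2; rewrite /= !mxE /E2 qform3 => h.
  by apply: (eq_by_ring h); left; ring.
have formG k a b c : qform (G k) (v3 a b c) = (G k 1 2 + G k 2 1) * (b * c) +
    (G k 0 2 + G k 2 0) * (a * c) + (G k 0 1 + G k 1 0) * (a * b).
  by rewrite qform3 D0 D1 D2; ring.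
have nz1 : v3 1 1 1 != 0 by apply: v3_neq0; left; exact: oner_neq0.
have nz2 : v3 (-1) 1 1 != 0 by apply: v3_neq0; right; left; exact: oner_neq0.
have nz3 : v3 1 (-1) 1 != 0 by apply: v3_neq0; left; exact: oner_neq0.
have nz4 : v3 1 1 (-1) != 0 by apply: v3_neq0; left; exact: oner_neq0.
have [k1 m] := pt_eq nz1 (Ha _).
rewrite F0E qevalE !formG v3Z in m; case/v3_inj: m => m10 m11 m12.
have [k2 m] := pt_eq nz2 (Ha _).
rewrite F0E qevalE !formG v3Z in m; case/v3_inj: m => m20 m21 m22.
have [k3 m] := pt_eq nz3 (Ha _).
rewrite F0E qevalE !formG v3Z in m; case/v3_inj: m => m30 m31 m32.
have [k4 m] := pt_eq nz4 (Ha _).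
rewrite F0E qevalE !formG v3Z in m; case/v3_inj: m => m40 m41 m42.
have := @solve_sys (G 0 1 2 + G 0 2 1) (G 0 0 2 + G 0 2 0) (G 0 0 1 + G 0 1 0)
  (G 1 1 2 + G 1 2 1) (G 1 0 2 + G 1 2 0) (G 1 0 1 + G 1 1 0)
  (G 2 1 2 + G 2 2 1) (G 2 0 2 + G 2 2 0) (G 2 0 1 + G 2 1 0).
case.
- by apply: (eq_by_ring (elim_k m10 m11)); first [left; ring | right; ring].
- by apply: (eq_by_ring (elim_k m20 m21)); first [left; ring | right; ring].
- by apply: (eq_by_ring (elim_k m30 m31)); first [left; ring | right; ring].
- by apply: (eq_by_ring (elim_k m40 m41)); first [left; ring | right; ring].
- by apply: (eq_by_ring (elim_k m10 m12)); first [left; ring | right; ring].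
- by apply: (eq_by_ring (elim_k m20 m22)); first [left; ring | right; ring].
- by apply: (eq_by_ring (elim_k m30 m32)); first [left; ring | right; ring].
- by apply: (eq_by_ring (elim_k m40 m42)); first [left; ring | right; ring].
move=> hb0 [hc0 [ha1 [hb1 [hc1 [ha2 [hb2 hc2]]]]]].
have formz z : qeval G z = (- (G 0 1 2 + G 0 2 1)) *: qeval F0 z.
  rewrite [z]v3E qevalE !formG F0E v3Z hb0 hc0 ha1 hb1 hc1 ha2 hb2 hc2.
  congr v3; ring.
exists (- (G 0 1 2 + G 0 2 1)); split => //.
apply: contraNneq Hx0 => l0; by rewrite formz l0 scale0r.
Qed.


Lemma colinM m n (D : 'M[K]_(m, n)) u v : colin u v -> colin (D *m u) (D *m v).
Proof.
move/colinP=> [->|[k ->]]; apply/colinP; first by left; rewrite mulmx0.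
by right; exists k; rewrite -scalemxAr.
Qed.

Lemma colinMu n (D : 'M[K]_n) u v : D \in unitmx -> colin (D *m u) (D *m v) <-> colin u v.
Proof.
move=> Du; split; last exact: colinM.
by move/(colinM (invmx D)); rewrite !mulKmx.
Qed.

Lemma mulmx_eq0u n (D : 'M[K]_n) (u : 'cV[K]_n) : D \in unitmx -> (D *m u == 0) = (u == 0).
Proof.
move=> Du; apply/eqP/eqP => [h|->]; last by rewrite mulmx0.
by rewrite -(mulKmx Du u) h mulmx0.
Qed.

Lemma psameMu n (D : 'M[K]_n) u v : D \in unitmx -> psame (D *m u) (D *m v) <-> psame u v.
Proof.
move=> Du; rewrite /psame !mulmx_eq0u // colinMu //.
Qed.

Lemma psameMl n (D : 'M[K]_n) x v : D \in unitmx -> psame x (D *m v) <-> psame (invmx D *m x) v.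
Proof.
move=> Du; rewrite -(@psameMu _ (invmx D)) ?unitmx_inv // mulKmx //.
Qed.

Definition qcomp (P : 'M[K]_3) (F : qmap K) (T : 'M[K]_3) : qmap K :=
  fun k => \sum_j P k j *: (T^T *m F j *m T).

Lemma qform_mul n (T : 'M[K]_n) N x : qform (T^T *m N *m T) x = qform N (T *m x).
Proof. by rewrite /qform trmx_mul !mulmxA. Qed.

Lemma qform_sum n (c : 'I_3 -> K) (N : 'I_3 -> 'M[K]_n) x :
  qform (\sum_j c j *: N j) x = \sum_j c j * qform (N j) x.
Proof.
rewrite /qform mulmx_sumr mulmx_suml summxE; apply: eq_bigr => j _.
by rewrite -scalemxAr -scalemxAl mxE.
Qed.

Lemma qcompE P F T x : qeval (qcomp P F T) x = P *m qeval F (T *m x).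
Proof.
apply/matrixP => i j; rewrite !mxE qform_sum; apply: eq_bigr => k _.
by rewrite qform_mul !mxE.
Qed.

Lemma basept_comp P F T x : P \in unitmx -> T \in unitmx ->
  basept (qcomp P F T) x <-> basept F (T *m x).
Proof.
move=> Pu Tu; rewrite /basept qcompE mulmx_eq0u //.
by split=> -[a /eqP b]; split => //; apply/eqP; move: b; rewrite mulmx_eq0u.
Qed.

Lemma qinverse_ext (F F' G G' : qmap K) : (forall x, qeval F x = qeval F' x) ->
  (forall x, qeval G x = qeval G' x) -> qinverse F G -> qinverse F' G'.
Proof.
move=> eF eG [a [[x b] [c [y d]]]]; split; last split; last split.
- by move=> z; rewrite -eF -eG.
- by exists x; rewrite -eF -eG.
- by move=> z; rewrite -eF -eG.
- by exists y; rewrite -eF -eG.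
Qed.

Lemma qinv_comp P F T G : P \in unitmx -> T \in unitmx -> qinverse F G ->
  qinverse (qcomp P F T) (qcomp (invmx T) G (invmx P)).
Proof.
move=> Pu Tu [a [[x b] [c [y d]]]]; split; last split; last split.
- move=> z; rewrite !qcompE mulKmx //.
  by rewrite -{2}(mulKmx Tu z); apply: colinM.
- exists (invmx T *m x); rewrite !qcompE mulKmx // mulKVmx //.
  by rewrite mulmx_eq0u ?unitmx_inv.
- move=> z; rewrite !qcompE mulKVmx //.
  by rewrite -{2}(mulKVmx Pu z); apply: colinM.
- exists (P *m y); rewrite !qcompE mulKmx // mulKVmx //.
  by rewrite mulmx_eq0u.
Qed.

Lemma exc_comp P F T a : P \in unitmx -> T \in unitmx ->
  exc_line F a -> exc_line (qcomp P F T) (a *m T).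
Proof.
move=> Pu Tu [an [y [yn H]]]; split.
  by apply: contraNneq an => h; rewrite -(mulmxK Tu a) h mul0mx.
exists (P *m y); split; first by rewrite mulmx_eq0u.
move=> x xn; rewrite -mulmxA qcompE => h; apply: colinM; apply: H h.
by rewrite mulmx_eq0u.
Qed.

Lemma exc_comp_inv P F T a : P \in unitmx -> T \in unitmx ->
  exc_line (qcomp P F T) a -> exc_line F (a *m invmx T).
Proof.
move=> Pu Tu [an [y [yn H]]]; split.
  by apply: contraNneq an => h; rewrite -(mulmxKV Tu a) h mul0mx.
exists (invmx P *m y); split; first by rewrite mulmx_eq0u ?unitmx_inv.
move=> z zn h; have := H (invmx T *m z).
rewrite mulmx_eq0u ?unitmx_inv // mulmxA qcompE mulKVmx // => /(_ zn h) c.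
by rewrite -(mulKmx Pu (qeval F z)); apply: colinM.
Qed.

Lemma nondeg_comp P F T : P \in unitmx -> T \in unitmx ->
  nondeg_cremona F -> nondeg_cremona (qcomp P F T).
Proof.
move=> Pu Tu [[x1 [x2 [x3 [[b1 b2 b3] [[n12 n13 n23] H]]]]] [a1 [a2 [a3 [[e1 e2 e3] [[m12 m13 m23] H']]]]]].
have Tiu : invmx T \in unitmx by rewrite unitmx_inv.
have bp x : basept F x -> basept (qcomp P F T) (invmx T *m x).
  by move=> h; apply/basept_comp => //; rewrite mulKVmx.
have nc u v : ~ colin u v -> ~ colin (invmx T *m u) (invmx T *m v).
  by move=> h /colinMu; move/(_ Tiu).
have ncT (u v : 'rV[K]_3) : ~ colin u^T v^T -> ~ colin (u *m T)^T (v *m T)^T.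
  by rewrite !trmx_mul => h /colinMu; rewrite unitmx_tr => /(_ Tu).
split.
  exists (invmx T *m x1), (invmx T *m x2), (invmx T *m x3); split; last split.
  - by split; apply: bp.
  - by split; apply: nc.
  - move=> x /basept_comp => /(_ Pu Tu) /H h.
    by rewrite -(mulKmx Tu x); case: h => h; [constructor 1|constructor 2|constructor 3]; apply: colinM.
exists (a1 *m T), (a2 *m T), (a3 *m T); split; last split.
- by split; apply: exc_comp.
- by split; apply: ncT.
- move=> a /exc_comp_inv => /(_ Pu Tu) /H' h.
  have -> : a = (a *m invmx T) *m T by rewrite mulmxKV.
  by rewrite !(trmx_mul _ T); case: h => h; [constructor 1|constructor 2|constructor 3]; apply: colinM.
Qed.

Lemma line_transport (M : 'M[K]_4) S c d : line_in_quadric (S^T *m M *m S) c d <->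
  line_in_quadric M (S *m c) (S *m d).
Proof.
rewrite /line_in_quadric /onQ; split => h a b; move: (h a b);
  by rewrite qform_mul mulmxDr -!scalemxAr.
Qed.

Lemma IL_transport (A A' : 'M[K]_(3,4)) M S D c' x : S \in unitmx -> D \in unitmx ->
  A *m S = D *m A' ->
  image_of_line_through A M (S *m c') x <->
  image_of_line_through A' (S^T *m M *m S) c' (invmx D *m x).
Proof.
move=> Su Du e; split.
  move=> [d [nc [hl hp]]]; exists (invmx S *m d); split; last split.
  - by move=> h; apply: nc; rewrite -(mulKVmx Su d); apply: colinM.
  - by apply/line_transport; rewrite mulKVmx.
  - by rewrite -psameMl // mulmxA -e -mulmxA mulKVmx.
move=> [d [nc [hl hp]]]; exists (S *m d); split; last split.
- by move=> /colinMu h; apply: nc; apply/h.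
- exact/line_transport.
- by rewrite mulmxA e -mulmxA psameMl.
Qed.

Lemma IL_scale (A : 'M[K]_(3,4)) M c x mu : mu != 0 ->
  image_of_line_through A M (mu *: c) x <-> image_of_line_through A M c x.
Proof.
move=> mn; split => -[d [nc [hl hp]]]; exists d; (split; last split) => //.
- move=> h; apply: nc; move/colinP: h => [->|[k ->]]; first by rewrite scaler0; exact: colin0.
  by apply/colinP; right; exists (k / mu); rewrite scalerA mulfVK.
- by move=> a b; have := hl (a / mu) b; rewrite scalerA mulfVK.
- move=> h; apply: nc; move/colinP: h => [/eqP|[k ->]]; last by rewrite scalerA; exact: colinZ.
  by rewrite scaler_eq0 (negPf mn) /= => /eqP ->; exact: colin0.
- by move=> a b; have := hl (a * mu) b; rewrite scalerA.
Qed.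


Lemma main_transport (A1 A2 : 'M[K]_(3,4)) (c1 c2 : 'cV[K]_4) (M : 'M[K]_4) S D1 D2 mu :
  S \in unitmx -> D1 \in unitmx -> D2 \in unitmx -> mu != 0 ->
  A1 *m S = D1 *m P1 -> A2 *m S = D2 *m P2 -> S^T *m M *m S = M0 ->
  S *m v4 1 0 0 0 = c1 -> S *m (mu *: v4 0 1 0 0) = c2 ->
  exists F : qmap K,
    [/\ quad_cremona F, nondeg_cremona F,
     (forall p : 'cV[K]_4, p != 0 -> onQ M p ->
        A1 *m p != 0 -> A2 *m p != 0 -> qeval F (A1 *m p) != 0 ->
        psame (qeval F (A1 *m p)) (A2 *m p)),
     (forall x : 'cV[K]_3, basept F x <->
        (psame x (A1 *m c2) \/ image_of_line_through A1 M c1 x)) &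
     (forall G : qmap K, qinverse F G ->
        forall y : 'cV[K]_3, basept G y <->
          (psame y (A2 *m c1) \/ image_of_line_through A2 M c2 y))].
Proof.
move=> Su D1u D2u mun eA1 eA2 eM ec1 ec2.
have D1iu : invmx D1 \in unitmx by rewrite unitmx_inv.
have D2iu : invmx D2 \in unitmx by rewrite unitmx_inv.
exists (qcomp D2 F0 (invmx D1)); split.
- by exists (qcomp (invmx (invmx D1)) F0 (invmx D2)); apply: qinv_comp => //; exact: qinv_F0.
- by apply: nondeg_comp => //; exact: nondeg_F0.
- move=> p pn hp h1 h2 h3.
  set p' := invmx S *m p.
  have pE : p = S *m p' by rewrite mulKVmx.
  have hp' : onQ M0 p' by rewrite /onQ -eM qform_mul -pE.
  have e : qeval (qcomp D2 F0 (invmx D1)) (A1 *m p) = p' 1 0 *: (A2 *m p).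
    rewrite qcompE {1}pE [A1 *m (S *m _)]mulmxA eA1 -mulmxA mulKmx // F0_onQ //.
    by rewrite -scalemxAr mulmxA -eA2 -mulmxA -pE.
  move: h3; rewrite e => h3; apply/psameP; split => //.
  exists (p' 1 0); split => //.
  by apply: contraNneq h3 => ->; rewrite scale0r.
- move=> x; rewrite basept_comp // basept_F0.
  rewrite -ec2 -ec1 [A1 *m (S *m _)]mulmxA eA1 -mulmxA psameMl // -scalemxAr P1v4.
  rewrite psameZr // (IL_transport _ _ _ Su D1u eA1) eM IL1.
  by split => [[h|h|h]|[h|[h|h]]]; auto; [constructor 1|constructor 2|constructor 3].
- move=> G hG y.
  have hG' : qinverse F0 (qcomp (invmx D1) G D2).
    apply: (qinverse_ext _ _ (@qinv_comp (invmx D2) _ D1 _ D2iu D1u hG)).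
      by move=> z; rewrite !qcompE mulKmx // mulKmx.
    by move=> z; rewrite invmxK.
  have [l [ln hl]] := inv_F0 hG'.
  have -> : basept G y <-> basept F0 (invmx D2 *m y).
    rewrite -[y in basept G y](mulKVmx D2u) -(@basept_comp (invmx D1)) //.
    rewrite /basept hl; split => -[a /eqP b]; split => //; apply/eqP; move: b; rewrite scaler_eq0 (negPf ln) //=.
  rewrite basept_F0 -ec2 -ec1 [A2 *m (S *m _)]mulmxA eA2 -mulmxA psameMl // P2v4.
  rewrite (IL_transport _ _ _ Su D2u eA2) eM IL_scale // IL2.
  by split => [[h|h|h]|[h|[h|h]]]; auto; [constructor 1|constructor 2|constructor 3].
Qed.


Definition bf n (M : 'M[K]_n) (u v : 'cV[K]_n) : K := (u^T *m M *m v) 0 0.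

Lemma bfDr n (M : 'M[K]_n) u v w : bf M u (v + w) = bf M u v + bf M u w.
Proof. by rewrite /bf mulmxDr mxE. Qed.
Lemma bfZr n (M : 'M[K]_n) u k v : bf M u (k *: v) = k * bf M u v.
Proof. by rewrite /bf -scalemxAr mxE. Qed.
Lemma bfDl n (M : 'M[K]_n) u v w : bf M (u + v) w = bf M u w + bf M v w.
Proof. by rewrite /bf linearD /= !mulmxDl mxE. Qed.
Lemma bfZl n (M : 'M[K]_n) k u v : bf M (k *: u) v = k * bf M u v.
Proof. by rewrite /bf linearZ /= -!scalemxAl mxE. Qed.
Lemma bfNr n (M : 'M[K]_n) u v : bf M u (- v) = - bf M u v.
Proof. by rewrite -scaleN1r bfZr mulN1r. Qed.
Lemma bfNl n (M : 'M[K]_n) u v : bf M (- u) v = - bf M u v.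
Proof. by rewrite -scaleN1r bfZl mulN1r. Qed.
Lemma bf_sym n (M : 'M[K]_n) u v : M^T = M -> bf M u v = bf M v u.
Proof.
move=> sM; have h : (u^T *m M *m v)^T = v^T *m M *m u by rewrite !trmx_mul trmxK sM mulmxA.
by rewrite /bf -h [RHS]mxE.
Qed.
Lemma qform_bf n (M : 'M[K]_n) u : qform M u = bf M u u.
Proof. by []. Qed.

Definition mk4 (v0 v1 v2 v3 : 'cV[K]_4) : 'M[K]_4 :=
  \matrix_(i, j) (if j == 0 then v0 else if j == 1 then v1 else if j == 2 then v2 else v3) i 0.

Lemma mk4_mul v0 v1 v2 v3 a b c d :
  mk4 v0 v1 v2 v3 *m v4 a b c d = a *: v0 + b *: v1 + c *: v2 + d *: v3.
Proof. by apply/matrixP => i j; rewrite !ord1 !mxE sum4 !mxE /= ![_ * a]mulrC ![_ * b]mulrC ![_ * c]mulrC ![_ * d]mulrC. Qed.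

Lemma col_mk4 v0 v1 v2 v3 (j : 'I_4) :
  col j (mk4 v0 v1 v2 v3) = if j == 0 then v0 else if j == 1 then v1 else if j == 2 then v2 else v3.
Proof. by apply/matrixP => i k; rewrite !mxE ord1. Qed.

Lemma gram_entry n (S M : 'M[K]_n) i j : (S^T *m M *m S) i j = bf M (col i S) (col j S).
Proof.
rewrite /bf !mxE; apply: eq_bigr => k _; rewrite !mxE; congr (_ * _).
by apply: eq_bigr => l _; rewrite !mxE.
Qed.


Lemma iso2 (hsq : forall x : K, exists y, y ^+ 2 = x) (al be ga : K) :
  al * ga - be ^+ 2 != 0 -> exists p q r s,
  [/\ al * p ^+ 2 + 2 * be * p * q + ga * q ^+ 2 = 0,
      al * r ^+ 2 + 2 * be * r * s + ga * s ^+ 2 = 0 &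
      al * p * r + be * (p * s + q * r) + ga * q * s = 1].
Proof.
move=> nd.
suff [p [q [r [s [h1 h2 h3 h4]]]]] : exists p q r s,
  [/\ al * p ^+ 2 + 2 * be * p * q + ga * q ^+ 2 = 0,
      al * r ^+ 2 + 2 * be * r * s + ga * s ^+ 2 = 0,
      al * p * r + be * (p * s + q * r) + ga * q * s != 0 & True].
  set c := al * p * r + be * (p * s + q * r) + ga * q * s in h3.
  exists p, q, (r / c), (s / c); split => //.
    have -> : al * (r / c) ^+ 2 + 2 * be * (r / c) * (s / c) + ga * (s / c) ^+ 2 =
      (al * r ^+ 2 + 2 * be * r * s + ga * s ^+ 2) / c ^+ 2 by field.
    by rewrite h2 mul0r.
  rewrite /c; field; exact: h3.
have [a0|an] := eqVneq al 0.
  have ben : be != 0 by apply: contraNneq nd => b0; rewrite a0 b0 mul0r expr2 mulr0 subrr.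
  exists 1, 0, (- ga), (2 * be); split => //.
  - by rewrite a0; ring.
  - by rewrite a0; ring.
  - have -> : al * 1 * - ga + be * (1 * (2 * be) + 0 * - ga) + ga * 0 * (2 * be) = 2 * be ^+ 2
      by rewrite a0; ring.
    by rewrite mulf_neq0 // expf_neq0.
have [de hde] := hsq (be ^+ 2 - al * ga).
have den : de != 0 by apply: contraNneq nd => d0; rewrite -oppr_eq0 opprB -hde d0 expr2 mul0r.
exists (- be + de), al, (- be - de), al; split => //.
- have -> : al * (- be + de) ^+ 2 + 2 * be * (- be + de) * al + ga * al ^+ 2 =
    al * (de ^+ 2 - (be ^+ 2 - al * ga)) by ring.
  by rewrite hde subrr mulr0.
- have -> : al * (- be - de) ^+ 2 + 2 * be * (- be - de) * al + ga * al ^+ 2 =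
    al * (de ^+ 2 - (be ^+ 2 - al * ga)) by ring.
  by rewrite hde subrr mulr0.
- have -> : al * (- be + de) * (- be - de) + be * ((- be + de) * al + al * (- be - de)) + ga * al * al =
    - (2 * al * de ^+ 2) + al * (de ^+ 2 - (be ^+ 2 - al * ga)) by ring.
  by rewrite hde subrr mulr0 addr0 oppr_eq0 !mulf_neq0 // -oppr_eq0 opprB.
Qed.


Lemma bf4 (N : 'M[K]_4) a b c d x y z w : bf N (v4 a b c d) (v4 x y z w) =
  a * (N 0 0 * x + N 0 1 * y + N 0 2 * z + N 0 3 * w) +
  b * (N 1 0 * x + N 1 1 * y + N 1 2 * z + N 1 3 * w) +
  c * (N 2 0 * x + N 2 1 * y + N 2 2 * z + N 2 3 * w) +
  d * (N 3 0 * x + N 3 1 * y + N 3 2 * z + N 3 3 * w).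
Proof. rewrite /bf !mxE sum4 !mxE !sum4 !mxE /=; ring. Qed.

Lemma Mv4 (N : 'M[K]_4) x y z w : N *m v4 x y z w =
  v4 (N 0 0 * x + N 0 1 * y + N 0 2 * z + N 0 3 * w)
     (N 1 0 * x + N 1 1 * y + N 1 2 * z + N 1 3 * w)
     (N 2 0 * x + N 2 1 * y + N 2 2 * z + N 2 3 * w)
     (N 3 0 * x + N 3 1 * y + N 3 2 * z + N 3 3 * w).
Proof. by rewrite [LHS]v4E !mxE !sum4 !mxE. Qed.


Lemma NF (hsq : forall x : K, exists y, y ^+ 2 = x) (N : 'M[K]_4) :
  N^T = N -> N \in unitmx -> N 0 0 = 0 -> N 1 1 = 0 -> N 0 1 != 0 ->
  exists s2 s3,
    (mk4 (v4 1 0 0 0) ((N 0 1)^-1 *: v4 0 1 0 0) s2 s3)^T *m N *m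
    (mk4 (v4 1 0 0 0) ((N 0 1)^-1 *: v4 0 1 0 0) s2 s3) = M0.
Proof.
move=> sN Nu n00 n11 mn.
have sy i j : N j i = N i j by rewrite -[in LHS]sN mxE.
pose w3 := v4 (- (N 1 2 / N 0 1)) (- (N 0 2 / N 0 1)) 1 0.
pose w4 := v4 (- (N 1 3 / N 0 1)) (- (N 0 3 / N 0 1)) 0 1.
have o03 : bf N (v4 1 0 0 0) w3 = 0.
  by rewrite /w3 bf4 ?(sy 0 1) ?(sy 0 2) ?(sy 0 3) ?(sy 1 2) ?(sy 1 3) ?(sy 2 3) ?n00 ?n11; field.
have o04 : bf N (v4 1 0 0 0) w4 = 0.
  by rewrite /w4 bf4 ?(sy 0 1) ?(sy 0 2) ?(sy 0 3) ?(sy 1 2) ?(sy 1 3) ?(sy 2 3) ?n00 ?n11; field.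
have o13 : bf N (v4 0 1 0 0) w3 = 0.
  by rewrite /w3 bf4 ?(sy 0 1) ?(sy 0 2) ?(sy 0 3) ?(sy 1 2) ?(sy 1 3) ?(sy 2 3) ?n00 ?n11; field.
have o14 : bf N (v4 0 1 0 0) w4 = 0.
  by rewrite /w4 bf4 ?(sy 0 1) ?(sy 0 2) ?(sy 0 3) ?(sy 1 2) ?(sy 1 3) ?(sy 2 3) ?n00 ?n11; field.
have key : forall p q, p * bf N w3 w3 + q * bf N w3 w4 = 0 ->
    p * bf N w3 w4 + q * bf N w4 w4 = 0 -> p = 0 /\ q = 0.
  move=> p q h1 h2.
  have : N *m v4 (- ((p * N 1 2 + q * N 1 3) / N 0 1)) (- ((p * N 0 2 + q * N 0 3) / N 0 1)) p q = 0.
    rewrite Mv4; apply/eqP; rewrite v4_eq0; apply/and4P; split; apply/eqP.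
    - by rewrite ?(sy 0 1) ?(sy 0 2) ?(sy 0 3) ?(sy 1 2) ?(sy 1 3) ?(sy 2 3) ?n00 ?n11; field.
    - by rewrite ?(sy 0 1) ?(sy 0 2) ?(sy 0 3) ?(sy 1 2) ?(sy 1 3) ?(sy 2 3) ?n00 ?n11; field.
    - rewrite -h1 /w3 /w4 !bf4.
      by rewrite ?(sy 0 1) ?(sy 0 2) ?(sy 0 3) ?(sy 1 2) ?(sy 1 3) ?(sy 2 3) ?n00 ?n11; field.
    - rewrite -h2 /w3 /w4 !bf4.
      by rewrite ?(sy 0 1) ?(sy 0 2) ?(sy 0 3) ?(sy 1 2) ?(sy 1 3) ?(sy 2 3) ?n00 ?n11; field.
  by move/eqP; rewrite mulmx_eq0u // v4_eq0 => /and4P [_ _ /eqP -> /eqP ->].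
have nd : bf N w3 w3 * bf N w4 w4 - bf N w3 w4 ^+ 2 != 0.
  apply/negP => /eqP H0.
  have [/andP [/eqP a0 /eqP b0]|nab] := boolP ((bf N w3 w3 == 0) && (bf N w3 w4 == 0)).
    have [] := key 1 0; first by rewrite a0 b0; ring.
      by rewrite b0; ring.
    by move/eqP; rewrite oner_eq0.
  have [] := key (bf N w3 w4) (- bf N w3 w3).
  - by ring.
  - by rewrite -[RHS]oppr0 -H0; ring.
  move=> b0 /eqP; rewrite oppr_eq0 => /eqP a0.
  by move: nab; rewrite a0 b0 eqxx.
have [p [q [r [s [h1 h2 h3]]]]] := iso2 hsq nd.
have s34 : bf N w4 w3 = bf N w3 w4 by rewrite bf_sym.
have o30 : bf N w3 (v4 1 0 0 0) = 0 by rewrite bf_sym.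
have o40 : bf N w4 (v4 1 0 0 0) = 0 by rewrite bf_sym.
have o31 : bf N w3 (v4 0 1 0 0) = 0 by rewrite bf_sym.
have o41 : bf N w4 (v4 0 1 0 0) = 0 by rewrite bf_sym.
have e00 : bf N (v4 1 0 0 0) (v4 1 0 0 0) = 0 by rewrite bf4 n00; ring.
have e11 : bf N (v4 0 1 0 0) (v4 0 1 0 0) = 0 by rewrite bf4 n11; ring.
have e01 : bf N (v4 1 0 0 0) (v4 0 1 0 0) = N 0 1 by rewrite bf4 n00; ring.
have e10 : bf N (v4 0 1 0 0) (v4 1 0 0 0) = N 0 1 by rewrite bf4 n11 (sy 0 1); ring.
exists (p *: w3 + q *: w4), (r *: w3 + s *: w4).
apply/matrixP => i j; rewrite gram_entry !col_mk4 [RHS]mxE.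
case: i => [[|[|[|[|i]]]] Hi]; case: j => [[|[|[|[|j]]]] Hj] //=;
  rewrite ?(bfDl, bfDr, bfZl, bfZr) ?o03 ?o04 ?o13 ?o14 ?o30 ?o40 ?o31 ?o41 ?s34 ?e00 ?e11 ?e01 ?e10;
  first [ field | (apply: (eq_by_ring h1); first [left; ring | right; ring])
        | (apply: (eq_by_ring h2); first [left; ring | right; ring])
        | (apply: (eq_by_ring h3); first [left; ring | right; ring]) | idtac ]; try done.
Qed.


Lemma M0M0 : M0 *m M0 = 1%:M.
Proof.
apply/matrixP => i j; rewrite !mxE sum4 !mxE.
by case: i => [[|[|[|[|i]]]] Hi]; case: j => [[|[|[|[|j]]]] Hj] //=; rewrite ?mulr1n ?mulr0n; ring.
Qed.

Lemma M0_unit : M0 \in unitmx.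
Proof. by case: (mulmx1_unit M0M0). Qed.

Lemma unit_of_gram (S M : 'M[K]_4) : S^T *m M *m S = M0 -> S \in unitmx.
Proof. by move=> e; have := M0_unit; rewrite -e unitmx_mul => /andP []. Qed.

Lemma mx_ext m n (X Y : 'M[K]_(m, n)) : (forall v : 'cV[K]_n, X *m v = Y *m v) -> X = Y.
Proof.
move=> h; apply/matrixP => i j.
have := congr1 (fun w : 'cV[K]_m => w i 0) (h (delta_mx j 0)).
by rewrite -!colE !mxE.
Qed.

Lemma P1T x y z : P1^T *m v3 x y z = v4 0 x y z.
Proof. rewrite [LHS]v4E !mxE !sum3 !mxE /=; congr v4; ring. Qed.

Lemma P2T x y z : P2^T *m v3 x y z = v4 x 0 y z.
Proof. rewrite [LHS]v4E !mxE !sum3 !mxE /=; congr v4; ring. Qed.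

Lemma D_from (A : 'M[K]_(3,4)) S (P : 'M[K]_(3,4)) : \rank A = 3%N -> S \in unitmx ->
  A *m S = A *m S *m P^T *m P -> exists D, D \in unitmx /\ A *m S = D *m P.
Proof.
move=> rA Su e; exists (A *m S *m P^T); split => //.
rewrite -row_free_unit /row_free eqn_leq rank_leq_row /=.
have : \rank (A *m S) = 3%N by rewrite mxrankMfree // row_free_unit.
by rewrite {1}e => h; rewrite -{1}h mxrankM_maxl.
Qed.

Lemma proj1_id (B : 'M[K]_(3,4)) : B *m v4 1 0 0 0 = 0 -> B = B *m P1^T *m P1.
Proof.
move=> h; apply: mx_ext => v; rewrite [v]v4E -!mulmxA P1v4 P1T.
have -> : v4 (v 0 0) (v 1 0) (v 2 0) (v 3 0) = v4 0 (v 1 0) (v 2 0) (v 3 0) + v 0 0 *: v4 1 0 0 0.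
  by rewrite v4Z v4D; congr v4; ring.
by rewrite mulmxDr -scalemxAr h scaler0 addr0.
Qed.

Lemma proj2_id (B : 'M[K]_(3,4)) : B *m v4 0 1 0 0 = 0 -> B = B *m P2^T *m P2.
Proof.
move=> h; apply: mx_ext => v; rewrite [v]v4E -!mulmxA P2v4 P2T.
have -> : v4 (v 0 0) (v 1 0) (v 2 0) (v 3 0) = v4 (v 0 0) 0 (v 2 0) (v 3 0) + v 1 0 *: v4 0 1 0 0.
  by rewrite v4Z v4D; congr v4; ring.
by rewrite mulmxDr -scalemxAr h scaler0 addr0.
Qed.

End Gen.

Section Gen2.
Variable K : fieldType.
Local Notation P1 := (@P1 K).
Local Notation P2 := (@P2 K).
Local Notation M0 := (@M0 K).

Lemma basis_ext (c1 c2 : 'cV[K]_4) : ~ colin c1 c2 -> exists r3 r4, mk4 c1 c2 r3 r4 \in unitmx.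
Proof.
move=> nc.
pose U := col_mx c1^T c2^T.
have rU : \rank U = 2%N.
  have -> : \rank U = \rank (row_mx c1 c2) by rewrite -mxrank_tr tr_col_mx !trmxK.
  have h1 : (\rank (row_mx c1 c2) <= 2)%N := rank_leq_col _.
  have h2 : ~ (\rank (row_mx c1 c2) <= 1)%N := nc.
  by move: h1 h2; case: (\rank _) => [|[|[|k]]] //= _ [].
have hC : \rank (U^C)%MS = 2%N by rewrite mxrank_compl rU.
pose R := castmx (hC, erefl 4%N) (row_base (U^C)%MS).
pose B := col_mx U R.
have rB : \rank B = 4%N.
  rewrite -addsmxE.
  have e : (U + R :=: U + U^C)%MS.
    apply: adds_eqmx; first exact: eqmx_refl.
    exact: eqmx_trans (eqmx_cast _ _) (eq_row_base _).
  by rewrite e; apply/eqP; exact: addsmx_compl_full.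
have Bu : (B : 'M[K]_4) \in unitmx by rewrite -row_full_unit /row_full rB.
exists (row 2 (B : 'M[K]_4))^T, (row 3 (B : 'M[K]_4))^T.
suff -> : mk4 c1 c2 (row 2 (B : 'M[K]_4))^T (row 3 (B : 'M[K]_4))^T = (B : 'M[K]_4)^T by rewrite unitmx_tr.
apply/matrixP => i j; rewrite [LHS]mxE [RHS]mxE.
case: j => [[|[|[|[|j]]]] Hj] //=; rewrite ?[(row _ _)^T _ _]mxE ?[row _ _ _ _]mxE //.
- have -> : (Ordinal Hj : 'I_4) = lshift 2 (lshift 1 (0 : 'I_1)) by apply: val_inj.
  have h1 := col_mxEu U R (lshift 1 (0 : 'I_1)) i; have h2 := col_mxEu c1^T c2^T (0 : 'I_1) i.
  by apply: (etrans _ (esym h1)); rewrite /U h2 mxE.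
- have -> : (Ordinal Hj : 'I_4) = lshift 2 (rshift 1 (0 : 'I_1)) by apply: val_inj.
  have h1 := col_mxEu U R (rshift 1 (0 : 'I_1)) i; have h2 := col_mxEd c1^T c2^T (0 : 'I_1) i.
  by apply: (etrans _ (esym h1)); rewrite /U h2 mxE.
- by congr (B _ _); apply: val_inj.
- by congr (B _ _); apply: val_inj.
Qed.


Lemma normal_form (two_nz : (2 : K) != 0) (hsq : forall x : K, exists y, y ^+ 2 = x)
  (A1 A2 : 'M[K]_(3,4)) (c1 c2 : 'cV[K]_4) (M : 'M[K]_4) :
  linproj A1 -> linproj A2 ->
  is_center A1 c1 -> is_center A2 c2 -> ~ colin c1 c2 ->
  smooth_quadric M -> onQ M c1 -> onQ M c2 -> ~ line_in_quadric M c1 c2 ->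
  exists S D1 D2 mu, [/\ S \in unitmx, D1 \in unitmx, D2 \in unitmx & mu != 0] /\
    [/\ A1 *m S = D1 *m P1, A2 *m S = D2 *m P2, S^T *m M *m S = M0,
        S *m v4 1 0 0 0 = c1 & S *m (mu *: v4 0 1 0 0) = c2].
Proof.
move=> hA1 hA2 [c1n hc1] [c2n hc2] nc [sM dM] q1 q2 nl.
have Mu : M \in unitmx by rewrite unitmxE unitfE.
have [r3 [r4 S0u]] := basis_ext nc.
pose S0 := mk4 c1 c2 r3 r4.
pose N := S0^T *m M *m S0.
have sN : N^T = N by rewrite /N !trmx_mul trmxK sM mulmxA.
have Nu : N \in unitmx by rewrite /N !unitmx_mul unitmx_tr S0u Mu.
have n00 : N 0 0 = 0 by rewrite /N gram_entry !col_mk4 /=; exact: q1.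
have n11 : N 1 1 = 0 by rewrite /N gram_entry !col_mk4 /=; exact: q2.
have n01 : N 0 1 = bf M c1 c2 by rewrite /N gram_entry !col_mk4.
have mn : N 0 1 != 0.
  rewrite n01; apply/negP => /eqP e; apply: nl => a b.
  rewrite /onQ qform_bf !(bfDl, bfDr, bfZl, bfZr) e (bf_sym _ _ sM) e.
  move: q1 q2; rewrite /onQ !qform_bf => -> ->; ring.
have [s2 [s3 eS2]] := NF two_nz hsq sN Nu n00 n11 mn.
pose S2 := mk4 (v4 1 0 0 0) ((N 0 1)^-1 *: v4 0 1 0 0) s2 s3.
have gS : (S0 *m S2)^T *m M *m (S0 *m S2) = M0.
  by rewrite trmx_mul -eS2 /N !mulmxA.
have Su := unit_of_gram gS.
have Se0 : S0 *m S2 *m v4 1 0 0 0 = c1.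
  by rewrite -mulmxA /S2 mk4_mul scale1r !scale0r !addr0 /S0 mk4_mul scale1r !scale0r !addr0.
have Se1 : S0 *m S2 *m v4 0 1 0 0 = (N 0 1)^-1 *: c2.
  rewrite -mulmxA /S2 mk4_mul scale1r !scale0r add0r !addr0 -scalemxAr /S0 mk4_mul.
  by rewrite scale1r !scale0r add0r !addr0.
have [D1 [D1u eD1]] : exists D, D \in unitmx /\ A1 *m (S0 *m S2) = D *m P1.
  apply: D_from => //; apply: proj1_id.
  by rewrite -mulmxA Se0.
have [D2 [D2u eD2]] : exists D, D \in unitmx /\ A2 *m (S0 *m S2) = D *m P2.
  apply: D_from => //; apply: proj2_id.
  by rewrite -mulmxA Se1 -scalemxAr hc2 scaler0.
exists (S0 *m S2), D1, D2, (N 0 1); split => //; split => //.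
by rewrite -scalemxAr Se1 scalerA mulfV // scale1r.
Qed.

End Gen2.

Theorem mainTheorem12 (R : realType)
  (A1 A2 : 'M[R[i]]_(3,4)) (c1 c2 : 'cV[R[i]]_4) (M : 'M[R[i]]_4) :
  linproj A1 -> linproj A2 ->
  is_center A1 c1 -> is_center A2 c2 -> ~ colin c1 c2 ->
  smooth_quadric M -> onQ M c1 -> onQ M c2 -> ~ line_in_quadric M c1 c2 ->
  exists F : qmap R[i],
    [/\ quad_cremona F, nondeg_cremona F,
     (forall p : 'cV[R[i]]_4, p != 0 -> onQ M p ->
        A1 *m p != 0 -> A2 *m p != 0 -> qeval F (A1 *m p) != 0 ->
        psame (qeval F (A1 *m p)) (A2 *m p)),
     (forall x : 'cV[R[i]]_3, basept F x <->
        (psame x (A1 *m c2) \/ image_of_line_through A1 M c1 x)) &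
     (forall G : qmap R[i], qinverse F G ->
        forall y : 'cV[R[i]]_3, basept G y <->
          (psame y (A2 *m c1) \/ image_of_line_through A2 M c2 y))].
Proof.
move=> hA1 hA2 hc1 hc2 nc sQ q1 q2 nl.
have two : (2 : R[i]) != 0 by rewrite pnatr_eq0.
have hsq : forall x : R[i], exists y, y ^+ 2 = x by move=> x; exists (sqrtc x); exact: sqr_sqrtc.
have [S [D1 [D2 [mu [[Su D1u D2u mun] [e1 e2 e3 e4 e5]]]]]] :=
  normal_form two hsq hA1 hA2 hc1 hc2 nc sQ q1 q2 nl.
have H := main_transport two Su D1u D2u mun e1 e2 e3 e4 e5. exact H.
Qed.
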